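(* Assume $\sum_n n^2\pi(n)<\infty$. If $R_0\le1$, then $m=0$ is the unique solution in $[0,\bar\pi]$ of $\bar\mu_\infty(m)=m$. If $R_0>1$, then there exists a unique $m_\star\in(0,\bar\pi]$ with $\bar\mu_\infty(m_\star)=m_\star$.
   Context: $\lambda_L,\lambda_G,\gamma>0$; $\pi$ a probability distribution on $\mathbb N$ with mean $\bar\pi$. For constant $m\in[0,\bar\pi]$, $\mu_\infty(m)$ is the unique stationary distribution (with first marginal $\pi$) of $(\nu,X_t(m))$ where $\nu\sim\pi$ and $X_t(m) = X_0 + P_{inf}\big( \int_{0}^{t} [ \lambda_L X_s(m) + \lambda_G \frac{\nu}{\bar\pi}m ](1-\frac{X_s(m)}{\nu}) ds \big) - P_{rec}\big( \int_{0}^{t} \gamma X_s(m) ds \big)$ with independent standard Poisson processes; $\bar\mu_\infty(m)$ is the mean of the second coordinate under $\mu_\infty(m)$. $R_0=\frac{\lambda_G}{\bar\pi}\mathbb E\big[\nu\int_0^\infty I(t)dt\,\big|\,I(0)=1\big]$ where $\nu\sim\pi$ and $I(t)=I(0)+P_{inf}\big(\int_0^t\lambda_L(1-I(s)/\nu)I(s)ds\big)-P_{rec}\big(\int_0^t\gamma I(s)ds\big)$. *)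

(* Defs.v *)
From Stdlib Require Import Reals Lra.
Open Scope R_scope.

(* For a household of size nu and constant global
   force m, X(m) is the continuous-time Markov chain on {0,...,nu} whose
   Poisson-clock representation in the paper gives the jump rates
     x -> x+1  at rate  birth lL lG pb m nu x
     x -> x-1  at rate  death g x.                                       *)
Definition birth (lL lG pb m : R) (nu x : nat) : R :=
  (lL * INR x + lG * (INR nu / pb) * m) * (1 - INR x / INR nu).

Definition death (g : R) (x : nat) : R := g * INR x.

(* Balance (stationarity) equation of the generator at state x of a
   birth-death chain on {0,...,nu} with rates b, d, for the measure p:
   total probability flux into x = total flux out of x. *)
Definition balance_at (b d : nat -> R) (p : nat -> R) (x : nat) : Prop :=
  (match x with O => 0 | S y => p y * b y end) + p (S x) * d (S x)
  = p x * (b x + d x).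

(* mu is a stationary distribution of the pair (nu, X_t(m)), nu ~ pi, with
   first marginal pi: mu nu x is the mass of state (nu, x).  Since nu is
   constant along trajectories, the generator acts fibrewise in nu. *)
Definition joint_stationary (lL lG g pb m : R) (pi : nat -> R)
    (mu : nat -> nat -> R) : Prop :=
  (forall nu x, 0 <= mu nu x) /\
  (forall nu x, (nu < x)%nat -> mu nu x = 0) /\
  (forall nu, sum_f_R0 (mu nu) nu = pi nu) /\
  (forall nu x, (x <= nu)%nat ->
      balance_at (birth lL lG pb m nu) (death g) (mu nu) x).

Definition second_mean (mu : nat -> nat -> R) (v : R) : Prop :=
  infinite_sum (fun nu => sum_f_R0 (fun x => INR x * mu nu x) nu) v.

Definition mubar_is (lL lG g pb : R) (pi : nat -> R) (m v : R) : Prop :=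
  exists mu, joint_stationary lL lG g pb m pi mu /\ second_mean mu v.

(* Expected total integral E[ int_0^oo I(t) dt | I(0) = x ] for the
   within-household chain I on {0,...,nu} (absorbed at 0) with rates
   x -> x+1 at lL x (1 - x/nu), x -> x-1 at g x.  As a function of the
   initial state it is the (unique, the chain being finite and absorbed
   a.s.) solution h of the Poisson equation  Q h = - id,  h(0) = 0. *)
Definition expected_integral (lL g : R) (nu : nat) (h : nat -> R) : Prop :=
  h O = 0 /\
  forall x, (1 <= x <= nu)%nat ->
    lL * INR x * (1 - INR x / INR nu) * (h (S x) - h x)
    + g * INR x * (h (pred x) - h x) + INR x = 0.

(* R0 = (lG/pb) * sum_nu pi(nu) nu H(nu), with H(nu) = h nu 1, a series of
   nonnegative terms (possibly +oo).  "R0 <= 1" : all partial sums <= 1. *)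
Definition R0_le_1 (lG pb : R) (pi : nat -> R) (h : nat -> nat -> R) : Prop :=
  forall N, lG / pb * sum_f_R0 (fun nu => pi nu * INR nu * h nu 1%nat) N <= 1.

(* Main.v *)
Require Import Defs.
From Stdlib Require Import Reals Lra Lia Classical.
Open Scope R_scope.

Fixpoint Cb (n x : nat) : R :=
  match n, x with
  | _, O => 1
  | O, S _ => 0
  | S n', S x' => Cb n' x' + Cb n' (S x')
  end.

Lemma Cb_0 n : Cb n 0 = 1.
Proof. destruct n; reflexivity. Qed.

Lemma Cb_gt n : forall x, (n < x)%nat -> Cb n x = 0.
Proof.
  induction n as [|n IH]; intros x Hx.
  - destruct x; [lia| reflexivity].
  - destruct x as [|x]; [lia|]. simpl. rewrite !IH by lia. ring.
Qed.

Lemma Cb_nonneg n : forall x, 0 <= Cb n x.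
Proof.
  induction n as [|n IH]; intros x; destruct x; simpl; try lra.
  specialize (IH x) as H1. specialize (IH (S x)) as H2. lra.
Qed.

Lemma Cb_ratio n : forall x, INR (S x) * Cb n (S x) = (INR n - INR x) * Cb n x.
Proof.
  induction n as [|n IH]; intros x.
  - destruct x; simpl; lra.
  - destruct x as [|x].
    + change (Cb (S n) 1) with (Cb n 0 + Cb n 1). rewrite Cb_0.
      specialize (IH 0%nat). rewrite Cb_0 in IH. rewrite !S_INR in *. simpl INR in *. rewrite Cb_0. lra.
    + change (Cb (S n) (S (S x))) with (Cb n (S x) + Cb n (S (S x))).
      change (Cb (S n) (S x)) with (Cb n x + Cb n (S x)).
      pose proof (IH (S x)) as H1. pose proof (IH x) as H2.
      rewrite !S_INR in *. nra.
Qed.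

Lemma Cb_absorb n x : INR (S x) * Cb (S n) (S x) = INR (S n) * Cb n x.
Proof.
  rewrite Cb_ratio. destruct x as [|x].
  - rewrite !Cb_0. simpl. lra.
  - change (Cb (S n) (S x)) with (Cb n x + Cb n (S x)).
    pose proof (Cb_ratio n x) as H. rewrite !S_INR in *. nra.
Qed.

Fixpoint rf (t : R) (x : nat) : R :=
  match x with O => 1 | S x' => rf t x' * (t + INR x') end.

Lemma rf_S t x : rf t (S x) = t * rf (t+1) x.
Proof.
  induction x as [|x IH].
  - simpl. ring.
  - change (rf t (S (S x))) with (rf t (S x) * (t + INR (S x))).
    rewrite IH, S_INR. simpl. ring.
Qed.

Lemma rf_diff t x : rf (t+1) (S x) - rf t (S x) = INR (S x) * rf (t+1) x.
Proof. rewrite (rf_S t x), S_INR. change (rf (t+1) (S x)) with (rf (t+1) x * (t+1+INR x)). ring. Qed.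

Lemma rf_nonneg t x : 0 <= t -> 0 <= rf t x.
Proof.
  intros Ht; induction x as [|x IH]; simpl; [lra|].
  apply Rmult_le_pos; auto. pose proof (pos_INR x). lra.
Qed.

Definition W k t n x := Cb n x * k ^ x * rf t x.
Definition Q k t n := sum_f_R0 (fun x => W k t n x) n.
Definition P k t n := sum_f_R0 (fun x => INR x * W k t n x) n.

Lemma W_nonneg k t n x : 0 <= k -> 0 <= t -> 0 <= W k t n x.
Proof.
  intros; unfold W. apply Rmult_le_pos; [apply Rmult_le_pos|].
  apply Cb_nonneg. apply pow_le; auto. apply rf_nonneg; auto.
Qed.

Lemma W_0 k t n : W k t n 0 = 1.
Proof. unfold W. rewrite Cb_0. simpl. ring. Qed.

Lemma sum_ge_term f N : (forall i, 0 <= f i) -> forall i, (i <= N)%nat -> f i <= sum_f_R0 f N.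
Proof.
  intros Hf. induction N as [|N IH]; intros i Hi.
  - assert (i = 0%nat) by lia. subst. simpl. lra.
  - simpl. destruct (Nat.eq_dec i (S N)) as [->|Hne]. pose proof (cond_pos_sum f N) as _. 
    + assert (0 <= sum_f_R0 f N).
      { clear IH Hi. induction N; simpl; [apply Hf|]. pose proof (Hf (S N)). lra. }
      lra.
    + pose proof (IH i ltac:(lia)). pose proof (Hf (S N)). lra.
Qed.

Lemma sum_nonneg f N : (forall i, 0 <= f i) -> 0 <= sum_f_R0 f N.
Proof. intros Hf; induction N; simpl; [apply Hf|]. pose proof (Hf (S N)); lra. Qed.

Lemma Q_ge1 k t n : 0 <= k -> 0 <= t -> 1 <= Q k t n.
Proof.
  intros. unfold Q. rewrite <- (W_0 k t n).
  apply (sum_ge_term (fun x => W k t n x)); [intros; apply W_nonneg; auto| lia].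
Qed.

Lemma sum_shift f n : sum_f_R0 f (S n) = f 0%nat + sum_f_R0 (fun i => f (S i)) n.
Proof. rewrite decomp_sum by lia. reflexivity. Qed.

Lemma sum_lin2 f g a n : sum_f_R0 (fun i => f i + a * g i) n = sum_f_R0 f n + a * sum_f_R0 g n.
Proof. induction n; simpl; [ring|]. rewrite IHn. ring. Qed.

Lemma I1 k t n : Q k t (S n) = Q k t n + t * k * Q k (t+1) n.
Proof.
  unfold Q. rewrite sum_shift.
  assert (E: sum_f_R0 (fun i => W k t (S n) (S i)) n =
             sum_f_R0 (fun i => W k t n (S i) + (t*k) * W k (t+1) n i) n).
  { apply sum_eq. intros i _. unfold W. change (Cb (S n) (S i)) with (Cb n i + Cb n (S i)).
    rewrite rf_S. simpl. ring. }
  rewrite E, sum_lin2.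
  assert (E2: sum_f_R0 (fun x => W k t n x) (S n) = W k t n 0 + sum_f_R0 (fun i => W k t n (S i)) n)
    by apply sum_shift.
  simpl in E2. unfold W at 2 in E2. rewrite (Cb_gt n (S n)) in E2 by lia.
  rewrite !W_0 in *. change (sum_f_R0 (W k (t + 1) n) n) with (sum_f_R0 (fun x => W k (t+1) n x) n). lra.
Qed.

Lemma I2 k t n : Q k (t+1) (S n) = Q k t (S n) + INR (S n) * k * Q k (t+1) n.
Proof.
  unfold Q. rewrite !sum_shift.
  assert (E: sum_f_R0 (fun i => W k (t+1) (S n) (S i)) n =
             sum_f_R0 (fun i => W k t (S n) (S i) + (INR (S n) * k) * W k (t+1) n i) n).
  { apply sum_eq. intros i _. unfold W.
    pose proof (rf_diff t i) as H. pose proof (Cb_absorb n i) as H2.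
    replace (rf (t+1) (S i)) with (rf t (S i) + INR (S i) * rf (t+1) i) by lra.
    replace (INR (S n) * k * (Cb n i * k ^ i * rf (t + 1) i)) with ((INR (S n) * Cb n i) * k^(S i) * rf (t+1) i) by (simpl; ring).
    rewrite <- H2. ring. }
  rewrite E, sum_lin2, !W_0. change (sum_f_R0 (W k (t + 1) n) n) with (sum_f_R0 (fun x => W k (t+1) n x) n). ring.
Qed.

Lemma I3 k t n : P k t (S n) = INR (S n) * t * k * Q k (t+1) n.
Proof.
  unfold P, Q. rewrite sum_shift. rewrite scal_sum.
  simpl (INR 0). rewrite Rmult_0_l, Rplus_0_l.
  apply sum_eq. intros i _. unfold W.
  pose proof (Cb_absorb n i) as H2. rewrite rf_S.
  replace (INR (S i) * (Cb (S n) (S i) * k ^ S i * (t * rf (t + 1) i)))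
    with ((INR (S i) * Cb (S n) (S i)) * k ^ S i * (t * rf (t + 1) i)) by ring.
  rewrite H2. simpl. ring.
Qed.

Lemma W_ratio k t n x : INR (S x) * W k t n (S x) = W k t n x * (k * (t + INR x) * (INR n - INR x)).
Proof.
  unfold W. replace (INR (S x) * (Cb n (S x) * k ^ S x * rf t (S x)))
   with ((INR (S x) * Cb n (S x)) * k ^ S x * rf t (S x)) by ring.
  rewrite Cb_ratio. simpl. ring.
Qed.

Fixpoint T (k t : R) (n : nat) : R :=
  match n with O => 1 | S n' => 1 + INR (S n') * k * / (t * k + / T k t n') end.
Definition ST k t n := / (t * k + / T k t n).

Lemma T_S k t n : T k t (S n) = 1 + INR (S n) * k * ST k t n.
Proof. reflexivity. Qed.

Lemma Q0 k t : Q k t 0 = 1.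
Proof. unfold Q; simpl; apply W_0. Qed.

Lemma ST_Q_from_T k t n : 0 <= k -> 0 <= t -> T k t n = Q k (t+1) n / Q k t n ->
  ST k t n = Q k (t+1) n / Q k t (S n).
Proof.
  intros Hk Ht H. unfold ST. rewrite H, I1.
  pose proof (Q_ge1 k t n Hk Ht). assert (0 <= t+1) by lra. pose proof (Q_ge1 k (t+1) n Hk H1).
  assert (0 <= t * k) by (apply Rmult_le_pos; auto).
  field. assert (0 <= t * k * Q k (t + 1) n) by (apply Rmult_le_pos; lra). repeat split; lra.
Qed.

Lemma T_Q k t n : 0 <= k -> 0 <= t -> T k t n = Q k (t+1) n / Q k t n.
Proof.
  intros Hk Ht. induction n as [|n IH].
  - rewrite !Q0. simpl. field.
  - rewrite T_S, (ST_Q_from_T k t n Hk Ht IH), I2.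
    assert (0 <= t+1) by lra.
    pose proof (Q_ge1 k t (S n) Hk Ht). field. lra.
Qed.

Lemma ST_Q k t n : 0 <= k -> 0 <= t -> ST k t n = Q k (t+1) n / Q k t (S n).
Proof. intros; apply ST_Q_from_T; auto; apply T_Q; auto. Qed.

Lemma PQ k t n : 0 <= k -> 0 <= t -> P k t (S n) / Q k t (S n) = INR (S n) * t * k * ST k t n.
Proof.
  intros Hk Ht. rewrite I3, ST_Q by auto. pose proof (Q_ge1 k t (S n) Hk Ht). field. lra.
Qed.

Lemma frac_le a b c d : 0 < b -> 0 < d -> a * d <= c * b -> a / b <= c / d.
Proof.
  intros Hb Hd H. replace (a / b) with ((a*d) * / (b*d)) by (field; lra).
  replace (c / d) with ((c*b) * / (b*d)) by (field; lra).
  apply Rmult_le_compat_r; [|auto]. left. apply Rinv_0_lt_compat. nra.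
Qed.

Lemma T_ge1 k t n : 0 < k -> 0 <= t -> 1 <= T k t n.
Proof.
  intros Hk Ht. induction n as [|n IH]; [simpl; lra|]. rewrite T_S; unfold ST.
  assert (0 < / T k t n) by (apply Rinv_0_lt_compat; lra).
  assert (0 <= t * k) by (apply Rmult_le_pos; lra).
  assert (0 < / (t * k + / T k t n)) by (apply Rinv_0_lt_compat; lra).
  pose proof (pos_INR (S n)). assert (0 <= INR (S n) * k) by (apply Rmult_le_pos; lra).
  assert (0 <= INR (S n) * k * / (t * k + / T k t n)) by (apply Rmult_le_pos; lra). lra.
Qed.

Lemma ST_pos k t n : 0 < k -> 0 <= t -> 0 < ST k t n.
Proof.
  intros Hk Ht. unfold ST. pose proof (T_ge1 k t n Hk Ht).
  assert (0 < / T k t n) by (apply Rinv_0_lt_compat; lra).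
  assert (0 <= t * k) by (apply Rmult_le_pos; lra).
  apply Rinv_0_lt_compat; lra.
Qed.

Lemma ST_0 k n : 0 < k -> ST k 0 n = T k 0 n.
Proof.
  intros Hk. unfold ST. pose proof (T_ge1 k 0 n Hk (Rle_refl 0)).
  rewrite Rmult_0_l, Rplus_0_l. rewrite Rinv_inv. reflexivity.
Qed.

Lemma tkST_le1 k t n : 0 < k -> 0 <= t -> t * k * ST k t n <= 1.
Proof.
  intros Hk Ht. unfold ST. pose proof (T_ge1 k t n Hk Ht).
  assert (0 < / T k t n) by (apply Rinv_0_lt_compat; lra).
  assert (0 <= t * k) by (apply Rmult_le_pos; lra).
  apply (Rmult_le_reg_r (t * k + / T k t n)); [lra|].
  rewrite Rmult_assoc, Rinv_l by lra. lra.
Qed.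

Lemma T_anti k n : 0 < k -> forall t1 t2, 0 <= t1 <= t2 -> T k t2 n <= T k t1 n.
Proof.
  intros Hk. induction n as [|n IH]; intros t1 t2 Ht; [simpl; lra|]. rewrite !T_S; unfold ST.
  pose proof (IH t1 t2 Ht).
  pose proof (T_ge1 k t1 n Hk ltac:(lra)). pose proof (T_ge1 k t2 n Hk ltac:(lra)).
  assert (/ T k t1 n <= / T k t2 n) by (apply Rinv_le_contravar; lra).
  assert (0 < / T k t1 n) by (apply Rinv_0_lt_compat; lra).
  assert (t1 * k <= t2 * k) by (apply Rmult_le_compat_r; lra).
  assert (0 <= t1 * k) by (apply Rmult_le_pos; lra).
  assert (/ (t2 * k + / T k t2 n) <= / (t1 * k + / T k t1 n)) by (apply Rinv_le_contravar; lra).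
  pose proof (pos_INR (S n)). assert (0 <= INR (S n) * k) by (apply Rmult_le_pos; lra).
  apply Rplus_le_compat_l. apply Rmult_le_compat_l; auto.
Qed.

Lemma ST_strict k n t1 t2 : 0 < k -> 0 <= t1 < t2 -> ST k t2 n < ST k t1 n.
Proof.
  intros Hk Ht. unfold ST. pose proof (T_anti k n Hk t1 t2 ltac:(lra)).
  pose proof (T_ge1 k t1 n Hk ltac:(lra)). pose proof (T_ge1 k t2 n Hk ltac:(lra)).
  assert (/ T k t1 n <= / T k t2 n) by (apply Rinv_le_contravar; lra).
  assert (0 < / T k t1 n) by (apply Rinv_0_lt_compat; lra).
  assert (t1 * k < t2 * k) by (apply Rmult_lt_compat_r; lra).
  assert (0 <= t1 * k) by (apply Rmult_le_pos; lra).
  apply Rinv_lt_contravar; [|lra]. apply Rmult_lt_0_compat; lra.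
Qed.

Lemma tST_from_tT k n t1 t2 : 0 < k -> 0 <= t1 <= t2 ->
  t1 * T k t1 n <= t2 * T k t2 n -> t1 * ST k t1 n <= t2 * ST k t2 n.
Proof.
  intros Hk Ht H. unfold ST.
  pose proof (T_ge1 k t1 n Hk ltac:(lra)). pose proof (T_ge1 k t2 n Hk ltac:(lra)).
  set (T1 := T k t1 n) in *. set (T2 := T k t2 n) in *.
  assert (0 < / T1) by (apply Rinv_0_lt_compat; lra).
  assert (0 < / T2) by (apply Rinv_0_lt_compat; lra).
  assert (0 <= t1 * k) by (apply Rmult_le_pos; lra).
  assert (0 <= t2 * k) by (apply Rmult_le_pos; lra).
  change (t1 * / (t1 * k + / T1) <= t2 * / (t2 * k + / T2)).
  fold (Rdiv t1 (t1 * k + / T1)). fold (Rdiv t2 (t2 * k + / T2)).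
  apply frac_le; try lra.
  assert (t1 * / T2 <= t2 * / T1).
  { replace (t1 * / T2) with ((t1 * T1) * (/T1 * /T2)) by (field; lra).
    replace (t2 * / T1) with ((t2 * T2) * (/T1 * /T2)) by (field; lra).
    apply Rmult_le_compat_r; auto. nra. }
  nra.
Qed.

Lemma tT_mono k n : 0 < k -> forall t1 t2, 0 <= t1 <= t2 -> t1 * T k t1 n <= t2 * T k t2 n.
Proof.
  intros Hk. induction n as [|n IH]; intros t1 t2 Ht.
  - simpl. lra.
  - rewrite !T_S. pose proof (tST_from_tT k n t1 t2 Hk Ht (IH t1 t2 Ht)).
    pose proof (pos_INR (S n)). assert (0 <= INR (S n) * k) by (apply Rmult_le_pos; lra).
    assert (INR (S n) * k * (t1 * ST k t1 n) <= INR (S n) * k * (t2 * ST k t2 n))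
      by (apply Rmult_le_compat_l; auto).
    nra.
Qed.

Lemma tST_mono k n t1 t2 : 0 < k -> 0 <= t1 <= t2 -> t1 * ST k t1 n <= t2 * ST k t2 n.
Proof. intros; apply tST_from_tT; auto; apply tT_mono; auto. Qed.

Lemma ST_from_T k n c : 0 < k -> 0 <= c ->
  (forall t, 0 <= t -> T k 0 n <= (1 + c * t) * T k t n) ->
  forall t, 0 <= t -> ST k 0 n <= (1 + (c + k * T k 0 n) * t) * ST k t n.
Proof.
  intros Hk Hc H t Ht.
  set (tau := T k 0 n).
  assert (Htau : 1 <= tau) by (apply T_ge1; lra).
  rewrite ST_0 by auto. fold tau. unfold ST.
  pose proof (T_ge1 k t n Hk Ht). pose proof (H t Ht). fold tau in H1.
  set (Tt := T k t n) in *.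
  assert (0 < / Tt) by (apply Rinv_0_lt_compat; lra).
  assert (0 <= t * k) by (apply Rmult_le_pos; lra).
  assert (tau * / Tt <= 1 + c * t).
  { apply (Rmult_le_reg_r Tt); [lra|]. rewrite Rmult_assoc, Rinv_l by lra. lra. }
  replace ((1 + (c + k * tau) * t) * / (t * k + / Tt)) with ((1 + (c + k * tau) * t) / (t * k + / Tt)) by reflexivity.
  apply (Rmult_le_reg_r (t * k + / Tt)); [lra|].
  unfold Rdiv. rewrite Rmult_assoc, Rinv_l by lra. nra.
Qed.

Lemma T_lower k n : 0 < k -> exists c, 0 <= c /\ forall t, 0 <= t -> T k 0 n <= (1 + c * t) * T k t n.
Proof.
  intros Hk. induction n as [|n IH].
  - exists 0. split; [lra|]. intros; simpl; lra.
  - destruct IH as [c [Hc H]].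
    assert (Htau : 1 <= T k 0 n) by (apply T_ge1; lra).
    exists (c + k * T k 0 n). split. nra.
    intros t Ht. rewrite !T_S.
    pose proof (ST_from_T k n c Hk Hc H t Ht) as HS.
    pose proof (ST_pos k t n Hk Ht). pose proof (pos_INR (S n)).
    assert (0 <= INR (S n) * k) by (apply Rmult_le_pos; lra).
    assert (INR (S n) * k * ST k 0 n <= INR (S n) * k * ((1 + (c + k * T k 0 n) * t) * ST k t n))
      by (apply Rmult_le_compat_l; auto).
    assert (0 <= (c + k * T k 0 n) * t) by (apply Rmult_le_pos; nra).
    nra.
Qed.

Lemma ST_lower k n : 0 < k -> exists c, 0 <= c /\ forall t, 0 <= t -> ST k 0 n <= (1 + c * t) * ST k t n.
Proof.
  intros Hk. destruct (T_lower k n Hk) as [c [Hc H]].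
  assert (Htau : 1 <= T k 0 n) by (apply T_ge1; lra).
  exists (c + k * T k 0 n). split. nra.
  apply ST_from_T; auto.
Qed.

Lemma poisson lL g n h : 0 < lL -> 0 < g -> expected_integral lL g (S n) h ->
  g * h 1%nat = T (lL / (INR (S n) * g)) 0 n.
Proof.
  intros HlL Hg [H0 HP]. set (k := lL / (INR (S n) * g)).
  assert (HnR : 0 < INR (S n)) by (apply lt_0_INR; lia).
  assert (Hk : 0 < k) by (unfold k; apply Rdiv_lt_0_compat; nra).
  assert (claim : forall j, (j <= n)%nat -> g * (h (S n - j)%nat - h (n - j)%nat) = T k 0 j).
  { induction j as [|j IH]; intros Hj.
    - specialize (HP (S n) ltac:(lia)). rewrite Nat.sub_0_r. simpl pred in HP.
      replace (1 - INR (S n) / INR (S n)) with 0 in HP by (field; lra).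
      simpl T. replace (S n - 0)%nat with (S n) by lia.
      rewrite Nat.sub_0_r. apply (Rmult_eq_reg_l (INR (S n))); [|lra]. lra.
    - specialize (IH ltac:(lia)).
      set (x := (n - S j)%nat) in *.
      assert (E1 : (S n - S j)%nat = S x) by (unfold x; lia).
      assert (E2 : (n - S j)%nat = x) by reflexivity.
      assert (E3 : (S n - j)%nat = S (S x)) by (unfold x; lia).
      assert (E4 : (n - j)%nat = S x) by (unfold x; lia).
      rewrite E3, E4 in IH. rewrite E1.
      specialize (HP (S x) ltac:(unfold x; lia)). simpl pred in HP.
      rewrite T_S, ST_0 by auto. rewrite <- IH.
      assert (Hx : INR (S x) + INR (S j) = INR (S n)).
      { rewrite <- plus_INR. f_equal. unfold x. lia. }
      assert (HxR : 0 < INR (S x)) by (apply lt_0_INR; lia).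
      replace (1 - INR (S x) / INR (S n)) with (INR (S j) / INR (S n)) in HP by (rewrite <- Hx; field; lra).
      unfold k.
      replace (INR (S j) * (lL / (INR (S n) * g)) * (g * (h (S (S x)) - h (S x))))
        with (lL * (INR (S j) / INR (S n)) * (h (S (S x)) - h (S x))) by (field; lra).
      set (B := lL * (INR (S j) / INR (S n)) * (h (S (S x)) - h (S x))) in *.
      assert (HB : INR (S x) * (B + g * (h x - h (S x)) + 1) = 0) by (rewrite <- HP; unfold B; ring).
      apply Rmult_integral in HB. destruct HB as [HB|HB]; [lra|]. lra. }
  specialize (claim n (le_n n)). rewrite Nat.sub_diag in claim.
  replace (S n - n)%nat with 1%nat in claim by lia. rewrite H0 in claim. lra.
Qed.

Definition kk lL g nu := lL / (INR nu * g).
Definition cc lL lG pb nu := lG * INR nu / (pb * lL).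
Definition AA lG g pb nu := lG * INR nu / (pb * g).
Definition qq lL lG g pb (pi : nat -> R) m nu :=
  pi nu * AA lG g pb nu * ST (kk lL g nu) (cc lL lG pb nu * m) (pred nu).
Definition term lL lG g pb pi m nu := m * qq lL lG g pb pi m nu.

Lemma DB_of_balance (b d p : nat -> R) nu : d 0%nat = 0 ->
  (forall x, (x <= nu)%nat -> balance_at b d p x) ->
  forall x, (x < nu)%nat -> p (S x) * d (S x) = p x * b x.
Proof.
  intros Hd0 Hb. induction x as [|x IH]; intros Hx.
  - specialize (Hb 0%nat ltac:(lia)). unfold balance_at in Hb. rewrite Hd0 in Hb. lra.
  - specialize (IH ltac:(lia)). specialize (Hb (S x) ltac:(lia)). unfold balance_at in Hb. lra.
Qed.

Lemma birth_eq lL lG g pb m n x : 0 < lL -> 0 < g -> 0 < pb ->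
  birth lL lG pb m (S n) x =
  g * (kk lL g (S n) * (cc lL lG pb (S n) * m + INR x) * (INR (S n) - INR x)).
Proof.
  intros. unfold birth, kk, cc. assert (0 < INR (S n)) by (apply lt_0_INR; lia).
  field. repeat split; lra.
Qed.

Lemma kk_pos lL g n : 0 < lL -> 0 < g -> 0 < kk lL g (S n).
Proof. intros. unfold kk. assert (0 < INR (S n)) by (apply lt_0_INR; lia). apply Rdiv_lt_0_compat; nra. Qed.
Lemma cc_pos lL lG pb n : 0 < lL -> 0 < lG -> 0 < pb -> 0 < cc lL lG pb (S n).
Proof. intros. unfold cc. assert (0 < INR (S n)) by (apply lt_0_INR; lia). apply Rdiv_lt_0_compat; nra. Qed.
Lemma AA_pos lG g pb n : 0 < lG -> 0 < g -> 0 < pb -> 0 < AA lG g pb (S n).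
Proof. intros. unfold AA. assert (0 < INR (S n)) by (apply lt_0_INR; lia). apply Rdiv_lt_0_compat; nra. Qed.

Lemma mAA lL lG g pb m n : 0 < lL -> 0 < g -> 0 < pb ->
  INR (S n) * (cc lL lG pb (S n) * m) * kk lL g (S n) = m * AA lG g pb (S n).
Proof.
  intros. unfold cc, kk, AA. assert (0 < INR (S n)) by (apply lt_0_INR; lia).
  field. repeat split; lra.
Qed.

Lemma stat_mean lL lG g pb pi m mu : 0 < lL -> 0 < lG -> 0 < g -> 0 < pb -> pi 0%nat = 0 -> 0 <= m ->
  joint_stationary lL lG g pb m pi mu ->
  forall nu, sum_f_R0 (fun x => INR x * mu nu x) nu = term lL lG g pb pi m nu.
Proof.
  intros HlL HlG Hg Hpb Hpi0 Hm [Hnn [Hz [Hs Hbal]]] nu.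
  destruct nu as [|n].
  - simpl. unfold term, qq. rewrite Hpi0. ring.
  - set (k := kk lL g (S n)). set (t := cc lL lG pb (S n) * m).
    assert (Hk : 0 < k) by (apply kk_pos; auto).
    assert (Ht : 0 <= t) by (apply Rmult_le_pos; [left; apply cc_pos|]; auto).
    pose proof (DB_of_balance (birth lL lG pb m (S n)) (death g) (mu (S n)) (S n)
                  ltac:(unfold death; simpl; ring) (Hbal (S n))) as DB.
    assert (Hform : forall x, (x <= S n)%nat -> mu (S n) x = mu (S n) 0%nat * W k t (S n) x).
    { induction x as [|x IH]; intros Hx.
      - rewrite W_0. ring.
      - specialize (IH ltac:(lia)). specialize (DB x ltac:(lia)).
        rewrite (birth_eq lL lG g pb m n x) in DB by auto. fold k t in DB. unfold death in DB.
        pose proof (W_ratio k t (S n) x) as WR.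
        assert (0 < INR (S x)) by (apply lt_0_INR; lia).
        apply (Rmult_eq_reg_r (g * INR (S x))); [|nra].
        rewrite IH in DB. 
        replace (mu (S n) 0%nat * W k t (S n) (S x) * (g * INR (S x)))
          with (mu (S n) 0%nat * g * (INR (S x) * W k t (S n) (S x))) by ring.
        rewrite WR. rewrite DB. ring. }
    assert (HQ : sum_f_R0 (mu (S n)) (S n) = mu (S n) 0%nat * Q k t (S n)).
    { unfold Q. rewrite scal_sum. apply sum_eq. intros x Hx. rewrite Hform by auto. ring. }
    assert (HP : sum_f_R0 (fun x => INR x * mu (S n) x) (S n) = mu (S n) 0%nat * P k t (S n)).
    { unfold P. rewrite scal_sum. apply sum_eq. intros x Hx. rewrite Hform by auto. ring. }
    rewrite HP. rewrite Hs in HQ.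
    pose proof (Q_ge1 k t (S n) (Rlt_le _ _ Hk) Ht).
    assert (mu (S n) 0%nat = pi (S n) / Q k t (S n)) by (rewrite HQ; field; lra).
    rewrite H0. 
    replace (pi (S n) / Q k t (S n) * P k t (S n)) with (pi (S n) * (P k t (S n) / Q k t (S n))) by (field; lra).
    rewrite PQ by lra. unfold term, qq. simpl pred. fold k. fold t.
    pose proof (mAA lL lG g pb m n HlL Hg Hpb) as HA. fold k t in HA. transitivity (pi (S n) * ST k t n * (INR (S n) * t * k)); [ring|]. rewrite HA. ring.
Qed.

Lemma kk_nonneg lL g nu : 0 < lL -> 0 < g -> 0 <= kk lL g nu.
Proof.
  intros. destruct nu. unfold kk. simpl. rewrite Rmult_0_l. unfold Rdiv. rewrite Rinv_0. lra.
  left; apply kk_pos; auto.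
Qed.
Lemma cc_nonneg lL lG pb nu : 0 < lL -> 0 < lG -> 0 < pb -> 0 <= cc lL lG pb nu.
Proof.
  intros. destruct nu. unfold cc. simpl. rewrite Rmult_0_r. unfold Rdiv. rewrite Rmult_0_l. lra.
  left; apply cc_pos; auto.
Qed.

Definition mu_c lL lG g pb (pi : nat -> R) m nu x :=
  if Nat.leb x nu then
    pi nu * W (kk lL g nu) (cc lL lG pb nu * m) nu x / Q (kk lL g nu) (cc lL lG pb nu * m) nu
  else 0.

Lemma stat_exists lL lG g pb pi m : 0 < lL -> 0 < lG -> 0 < g -> 0 < pb -> pi 0%nat = 0 -> 0 <= m ->
  (forall n, 0 <= pi n) ->
  joint_stationary lL lG g pb m pi (mu_c lL lG g pb pi m).
Proof.
  intros HlL HlG Hg Hpb Hpi0 Hm Hpi.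
  assert (Hkt : forall nu, 0 <= kk lL g nu /\ 0 <= cc lL lG pb nu * m).
  { intros nu. split. apply kk_nonneg; auto. apply Rmult_le_pos; auto. apply cc_nonneg; auto. }
  assert (HDB : forall nu x, (x <= nu)%nat ->
     mu_c lL lG g pb pi m nu (S x) * death g (S x) = mu_c lL lG g pb pi m nu x * birth lL lG pb m nu x).
  { intros nu x Hx. unfold mu_c.
    rewrite (proj2 (Nat.leb_le x nu) Hx).
    destruct (Nat.eq_dec x nu) as [->|Hne].
    - rewrite (proj2 (Nat.leb_gt (S nu) nu) ltac:(lia)).
      destruct nu as [|n].
      + unfold birth. simpl INR. unfold Rdiv. ring.
      + rewrite (birth_eq lL lG g pb m n (S n)) by auto. ring.
    - rewrite (proj2 (Nat.leb_le (S x) nu) ltac:(lia)).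
      destruct nu as [|n]; [lia|].
      rewrite (birth_eq lL lG g pb m n x) by auto.
      set (k := kk lL g (S n)). set (t := cc lL lG pb (S n) * m).
      pose proof (W_ratio k t (S n) x) as WR.
      destruct (Hkt (S n)) as [Hk Ht]. fold k t in Hk, Ht.
      pose proof (Q_ge1 k t (S n) Hk Ht).
      unfold death.
      replace (pi (S n) * W k t (S n) (S x) / Q k t (S n) * (g * INR (S x)))
        with (pi (S n) * g / Q k t (S n) * (INR (S x) * W k t (S n) (S x))) by (field; lra).
      rewrite WR. field. lra. }
  split; [|split; [|split]].
  - intros nu x. unfold mu_c. destruct (Nat.leb x nu); [|lra].
    destruct (Hkt nu) as [Hk Ht]. pose proof (Q_ge1 _ _ nu Hk Ht).
    unfold Rdiv. apply Rmult_le_pos; [apply Rmult_le_pos; [auto| apply W_nonneg; auto]|].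
    left; apply Rinv_0_lt_compat; lra.
  - intros nu x Hx. unfold mu_c. rewrite (proj2 (Nat.leb_gt x nu) Hx). reflexivity.
  - intros nu. destruct (Hkt nu) as [Hk Ht]. pose proof (Q_ge1 _ _ nu Hk Ht).
    transitivity (pi nu / Q (kk lL g nu) (cc lL lG pb nu * m) nu * Q (kk lL g nu) (cc lL lG pb nu * m) nu).
    + unfold Q at 2. rewrite scal_sum. apply sum_eq. intros x Hx. unfold mu_c.
      rewrite (proj2 (Nat.leb_le x nu) Hx). field. lra.
    + field. lra.
  - intros nu x Hx. unfold balance_at. destruct x as [|y].
    + pose proof (HDB nu 0%nat ltac:(lia)). unfold death in *. simpl INR in *. rewrite Rmult_0_r, Rplus_0_r, Rplus_0_l. exact H.
    + pose proof (HDB nu y ltac:(lia)). pose proof (HDB nu (S y) Hx). lra.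
Qed.

Lemma inf_ext f g l : (forall n, f n = g n) -> infinite_sum f l -> infinite_sum g l.
Proof.
  intros H Hf eps He. destruct (Hf eps He) as [N HN]. exists N. intros n Hn.
  rewrite <- (sum_eq f g n) by (intros; apply H). apply HN; auto.
Qed.

Lemma inf_ge_partial f l : infinite_sum f l -> (forall n, 0 <= f n) -> forall N, sum_f_R0 f N <= l.
Proof.
  intros Hf Hp N. apply (growing_ineq (sum_f_R0 f)); auto.
  intros n. simpl. pose proof (Hp (S n)). lra.
Qed.

Lemma inf_pos f l n0 : infinite_sum f l -> (forall n, 0 <= f n) -> 0 < f n0 -> 0 < l.
Proof.
  intros Hf Hp H. pose proof (inf_ge_partial f l Hf Hp n0).
  pose proof (sum_ge_term f n0 Hp n0 (le_n _)). lra.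
Qed.

Lemma inf_le f g l1 l2 : infinite_sum f l1 -> infinite_sum g l2 -> (forall n, f n <= g n) -> l1 <= l2.
Proof.
  intros Hf Hg H. eapply Rle_cv_lim; [|exact Hf|exact Hg].
  intros n. induction n; simpl; [apply H|]. pose proof (H (S n)); lra.
Qed.

Lemma inf_zero : infinite_sum (fun _ => 0) 0.
Proof.
  intros eps He. exists 0%nat. intros n _.
  assert (sum_f_R0 (fun _ => 0) n = 0) by (induction n; simpl; lra).
  rewrite H. unfold Rdist. rewrite Rminus_0_r, Rabs_R0. lra.
Qed.

Lemma sum_lin f g c d N : sum_f_R0 (fun n => f n * c - g n * d) N = sum_f_R0 f N * c - sum_f_R0 g N * d.
Proof. induction N; simpl; [ring|]. rewrite IHN. ring. Qed.

Lemma inf_lin f g lf lg c d : infinite_sum f lf -> infinite_sum g lg ->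
  infinite_sum (fun n => f n * c - g n * d) (lf * c - lg * d).
Proof.
  intros Hf Hg.
  assert (Hc : forall a, Un_cv (fun _ : nat => a) a).
  { intros a eps He. exists 0%nat. intros. unfold Rdist. rewrite Rminus_diag, Rabs_R0. lra. }
  pose proof (CV_mult _ _ _ _ Hf (Hc c)) as H1.
  pose proof (CV_mult _ _ _ _ Hg (Hc d)) as H2.
  pose proof (CV_minus _ _ _ _ H1 H2) as H3.
  intros eps He. destruct (H3 eps He) as [N HN]. exists N. intros n Hn.
  rewrite sum_lin. apply HN; auto.
Qed.

Lemma inf_ub f l N0 B : infinite_sum f l -> (forall N, (N >= N0)%nat -> sum_f_R0 f N <= B) -> l <= B.
Proof.
  intros Hf H. destruct (Rle_dec l B) as [|Hn]; auto. exfalso.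
  destruct (Hf (l - B) ltac:(lra)) as [N HN].
  specialize (HN (max N N0) ltac:(lia)). specialize (H (max N N0) ltac:(lia)).
  unfold Rdist in HN. apply Rabs_def2 in HN. lra.
Qed.

Lemma inf_exists f g l : (forall n, 0 <= f n <= g n) -> infinite_sum g l -> exists v, infinite_sum f v.
Proof.
  intros H Hg. destruct (Rseries_CV_comp f g H (exist _ l Hg)) as [v Hv]. exists v. exact Hv.
Qed.

Lemma term_eq lL lG g pb pi m n : 0 < lL -> 0 < g -> 0 < pb ->
  term lL lG g pb pi m (S n) =
  pi (S n) * INR (S n) * kk lL g (S n) *
    ((cc lL lG pb (S n) * m) * ST (kk lL g (S n)) (cc lL lG pb (S n) * m) n).
Proof.
  intros. unfold term, qq. simpl pred.
  pose proof (mAA lL lG g pb m n H H0 H1) as HA.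
  transitivity (pi (S n) * ST (kk lL g (S n)) (cc lL lG pb (S n) * m) n * (m * AA lG g pb (S n))); [ring|].
  rewrite <- HA. ring.
Qed.

Lemma term_bounds lL lG g pb pi m nu : 0 < lL -> 0 < lG -> 0 < g -> 0 < pb -> pi 0%nat = 0 ->
  (forall n, 0 <= pi n) -> 0 <= m ->
  0 <= term lL lG g pb pi m nu <= INR nu * pi nu.
Proof.
  intros HlL HlG Hg Hpb Hpi0 Hpi Hm. destruct nu as [|n].
  - unfold term, qq. rewrite Hpi0. simpl. lra.
  - rewrite term_eq by auto.
    set (k := kk lL g (S n)). set (t := cc lL lG pb (S n) * m).
    assert (Hk : 0 < k) by (apply kk_pos; auto).
    assert (Ht : 0 <= t) by (apply Rmult_le_pos; [left; apply cc_pos|]; auto).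
    pose proof (tkST_le1 k t n Hk Ht). pose proof (ST_pos k t n Hk Ht).
    pose proof (pos_INR (S n)). pose proof (Hpi (S n)).
    assert (0 <= t * ST k t n) by (apply Rmult_le_pos; lra).
    assert (0 <= pi (S n) * INR (S n)) by (apply Rmult_le_pos; lra).
    replace (pi (S n) * INR (S n) * k * (t * ST k t n)) with ((pi (S n) * INR (S n)) * (t * k * ST k t n)) by ring.
    split. apply Rmult_le_pos; [lra|]. apply Rmult_le_pos; [apply Rmult_le_pos|]; lra.
    replace (INR (S n) * pi (S n)) with ((pi (S n) * INR (S n)) * 1) by ring.
    apply Rmult_le_compat_l; auto.
Qed.

Lemma term_mono lL lG g pb pi m m' nu : 0 < lL -> 0 < lG -> 0 < g -> 0 < pb -> pi 0%nat = 0 ->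
  (forall n, 0 <= pi n) -> 0 <= m <= m' ->
  term lL lG g pb pi m nu <= term lL lG g pb pi m' nu.
Proof.
  intros HlL HlG Hg Hpb Hpi0 Hpi Hm. destruct nu as [|n].
  - unfold term, qq. rewrite Hpi0. lra.
  - rewrite !term_eq by auto.
    set (k := kk lL g (S n)).
    assert (Hk : 0 < k) by (apply kk_pos; auto).
    assert (Hc : 0 < cc lL lG pb (S n)) by (apply cc_pos; auto).
    pose proof (tST_mono k n (cc lL lG pb (S n) * m) (cc lL lG pb (S n) * m') Hk).
    assert (0 <= cc lL lG pb (S n) * m <= cc lL lG pb (S n) * m') by (split; [apply Rmult_le_pos|apply Rmult_le_compat_l]; lra).
    pose proof (pos_INR (S n)). pose proof (Hpi (S n)).
    apply Rmult_le_compat_l; auto.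
    apply Rmult_le_pos; [apply Rmult_le_pos|]; lra.
Qed.

Lemma qq_nonneg lL lG g pb pi m nu : 0 < lL -> 0 < lG -> 0 < g -> 0 < pb -> pi 0%nat = 0 ->
  (forall n, 0 <= pi n) -> 0 <= m -> 0 <= qq lL lG g pb pi m nu.
Proof.
  intros HlL HlG Hg Hpb Hpi0 Hpi Hm. unfold qq. destruct nu as [|n].
  - rewrite Hpi0. lra.
  - simpl pred. pose proof (AA_pos lG g pb n HlG Hg Hpb). pose proof (Hpi (S n)).
    assert (Ht : 0 <= cc lL lG pb (S n) * m) by (apply Rmult_le_pos; [left; apply cc_pos|]; auto).
    pose proof (ST_pos _ _ n (kk_pos lL g n HlL Hg) Ht).
    apply Rmult_le_pos; [apply Rmult_le_pos|]; lra.
Qed.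

Lemma qq_anti lL lG g pb pi m m' nu : 0 < lL -> 0 < lG -> 0 < g -> 0 < pb -> pi 0%nat = 0 ->
  (forall n, 0 <= pi n) -> 0 <= m <= m' -> qq lL lG g pb pi m' nu <= qq lL lG g pb pi m nu.
Proof.
  intros HlL HlG Hg Hpb Hpi0 Hpi Hm. unfold qq. destruct nu as [|n].
  - rewrite Hpi0. lra.
  - simpl pred. pose proof (AA_pos lG g pb n HlG Hg Hpb). pose proof (Hpi (S n)).
    assert (Hc : 0 < cc lL lG pb (S n)) by (apply cc_pos; auto).
    assert (0 <= pi (S n) * AA lG g pb (S n)) by (apply Rmult_le_pos; lra).
    apply Rmult_le_compat_l; auto.
    destruct (Rle_lt_or_eq_dec _ _ (proj2 Hm)) as [Hlt|Heq].
    + left. apply ST_strict. apply kk_pos; auto. split. apply Rmult_le_pos; lra.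
      apply Rmult_lt_compat_l; lra.
    + rewrite Heq. lra.
Qed.

Lemma qq_strict lL lG g pb pi m m' n : 0 < lL -> 0 < lG -> 0 < g -> 0 < pb ->
  0 < pi (S n) -> 0 <= m < m' -> qq lL lG g pb pi m' (S n) < qq lL lG g pb pi m (S n).
Proof.
  intros HlL HlG Hg Hpb Hpi Hm. unfold qq. simpl pred.
  pose proof (AA_pos lG g pb n HlG Hg Hpb).
  assert (Hc : 0 < cc lL lG pb (S n)) by (apply cc_pos; auto).
  assert (0 < pi (S n) * AA lG g pb (S n)) by (apply Rmult_lt_0_compat; lra).
  apply Rmult_lt_compat_l; auto.
  apply ST_strict. apply kk_pos; auto. split. apply Rmult_le_pos; lra.
  apply Rmult_lt_compat_l; lra.
Qed.

Lemma qq0_R0 lL lG g pb pi h nu : 0 < lL -> 0 < lG -> 0 < g -> 0 < pb -> pi 0%nat = 0 ->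
  (forall nu, (1 <= nu)%nat -> expected_integral lL g nu (h nu)) ->
  qq lL lG g pb pi 0 nu = lG / pb * (pi nu * INR nu * h nu 1%nat).
Proof.
  intros HlL HlG Hg Hpb Hpi0 Hh. unfold qq. destruct nu as [|n].
  - rewrite Hpi0. simpl. ring.
  - simpl pred. rewrite Rmult_0_r. rewrite ST_0 by (apply kk_pos; auto).
    pose proof (poisson lL g n (h (S n)) HlL Hg (Hh (S n) ltac:(lia))) as HP.
    unfold kk. rewrite <- HP. unfold AA. field. lra.
Qed.

Lemma qq_lower lL lG g pb pi nu : 0 < lL -> 0 < lG -> 0 < g -> 0 < pb -> pi 0%nat = 0 ->
  (forall n, 0 <= pi n) ->
  exists c, 0 <= c /\ forall m, 0 <= m -> qq lL lG g pb pi 0 nu <= (1 + c * m) * qq lL lG g pb pi m nu.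
Proof.
  intros HlL HlG Hg Hpb Hpi0 Hpi. destruct nu as [|n].
  - exists 0. split; [lra|]. intros. unfold qq. rewrite Hpi0. lra.
  - destruct (ST_lower (kk lL g (S n)) n (kk_pos lL g n HlL Hg)) as [c [Hc H]].
    assert (Hcc : 0 < cc lL lG pb (S n)) by (apply cc_pos; auto).
    exists (c * cc lL lG pb (S n)). split. apply Rmult_le_pos; lra.
    intros m Hm. unfold qq. simpl pred. rewrite Rmult_0_r.
    specialize (H (cc lL lG pb (S n) * m) ltac:(apply Rmult_le_pos; lra)).
    pose proof (AA_pos lG g pb n HlG Hg Hpb). pose proof (Hpi (S n)).
    assert (0 <= pi (S n) * AA lG g pb (S n)) by (apply Rmult_le_pos; lra).
    replace ((1 + c * cc lL lG pb (S n) * m) *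
       (pi (S n) * AA lG g pb (S n) * ST (kk lL g (S n)) (cc lL lG pb (S n) * m) n))
     with ((pi (S n) * AA lG g pb (S n)) * ((1 + c * (cc lL lG pb (S n) * m)) * ST (kk lL g (S n)) (cc lL lG pb (S n) * m) n)) by ring.
    apply Rmult_le_compat_l; auto.
Qed.

Lemma mubar_iff lL lG g pb pi m v : 0 < lL -> 0 < lG -> 0 < g -> 0 < pb -> pi 0%nat = 0 ->
  (forall n, 0 <= pi n) -> 0 <= m ->
  (mubar_is lL lG g pb pi m v <-> infinite_sum (term lL lG g pb pi m) v).
Proof.
  intros HlL HlG Hg Hpb Hpi0 Hpi Hm. split.
  - intros [mu [Hj Hs]]. unfold second_mean in Hs.
    eapply inf_ext; [|exact Hs]. intros nu. apply (stat_mean lL lG g pb pi m mu); auto.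
  - intros Hs. exists (mu_c lL lG g pb pi m). split.
    + apply stat_exists; auto.
    + unfold second_mean. eapply inf_ext; [|exact Hs]. intros nu. symmetry.
      apply (stat_mean lL lG g pb pi m); auto. apply stat_exists; auto.
Qed.

Lemma qq_sum_lower lL lG g pb pi N : 0 < lL -> 0 < lG -> 0 < g -> 0 < pb -> pi 0%nat = 0 ->
  (forall n, 0 <= pi n) ->
  exists C, 0 <= C /\ forall m, 0 <= m ->
    sum_f_R0 (qq lL lG g pb pi 0) N <= (1 + C * m) * sum_f_R0 (qq lL lG g pb pi m) N.
Proof.
  intros HlL HlG Hg Hpb Hpi0 Hpi. induction N as [|N IH].
  - simpl. apply qq_lower; auto.
  - destruct IH as [C1 [HC1 H1]].
    destruct (qq_lower lL lG g pb pi (S N) HlL HlG Hg Hpb Hpi0 Hpi) as [c [Hc H2]].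
    exists (Rmax C1 c). split. pose proof (Rmax_l C1 c); lra.
    intros m Hm. simpl. specialize (H1 m Hm). specialize (H2 m Hm).
    pose proof (Rmax_l C1 c). pose proof (Rmax_r C1 c).
    assert (HS : 0 <= sum_f_R0 (qq lL lG g pb pi m) N)
      by (apply sum_nonneg; intros; apply qq_nonneg; auto).
    pose proof (qq_nonneg lL lG g pb pi m (S N) HlL HlG Hg Hpb Hpi0 Hpi Hm).
    assert (C1 * m <= Rmax C1 c * m) by (apply Rmult_le_compat_r; auto).
    assert (c * m <= Rmax C1 c * m) by (apply Rmult_le_compat_r; auto).
    nra.
Qed.

Lemma fix_lt lL lG g pb pi m m' n0 : 0 < lL -> 0 < lG -> 0 < g -> 0 < pb -> pi 0%nat = 0 ->
  (forall n, 0 <= pi n) -> 0 < pi (S n0) -> 0 < m < m' ->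
  infinite_sum (term lL lG g pb pi m) m -> infinite_sum (term lL lG g pb pi m') m' -> False.
Proof.
  intros HlL HlG Hg Hpb Hpi0 Hpi Hn0 Hm H1 H2.
  pose proof (inf_lin _ _ _ _ m' m H1 H2) as H3.
  assert (0 < m * m' - m' * m).
  { apply (inf_pos _ _ (S n0) H3).
    - intros nu. unfold term.
      replace (m * qq lL lG g pb pi m nu * m' - m' * qq lL lG g pb pi m' nu * m)
        with ((m * m') * (qq lL lG g pb pi m nu - qq lL lG g pb pi m' nu)) by ring.
      apply Rmult_le_pos. nra.
      pose proof (qq_anti lL lG g pb pi m m' nu HlL HlG Hg Hpb Hpi0 Hpi ltac:(lra)). lra.
    - unfold term.
      replace (m * qq lL lG g pb pi m (S n0) * m' - m' * qq lL lG g pb pi m' (S n0) * m)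
        with ((m * m') * (qq lL lG g pb pi m (S n0) - qq lL lG g pb pi m' (S n0))) by ring.
      apply Rmult_lt_0_compat. nra.
      pose proof (qq_strict lL lG g pb pi m m' n0 HlL HlG Hg Hpb Hn0 ltac:(lra)). lra. }
  lra.
Qed.

Theorem corollary7p5
  (lL lG g : R) (pi : nat -> R) (pb : R)
  (hlL : 0 < lL) (hlG : 0 < lG) (hg : 0 < g)
  (hpi_nn : forall n, 0 <= pi n)
  (hpi0 : pi O = 0)
  (hpi_sum : infinite_sum pi 1)
  (hpb : infinite_sum (fun n => INR n * pi n) pb)
  (hsecond : exists s, infinite_sum (fun n => INR n ^ 2 * pi n) s)
  (h : nat -> nat -> R)
  (hh : forall nu, (1 <= nu)%nat -> expected_integral lL g nu (h nu)) :
  (R0_le_1 lG pb pi h ->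
     mubar_is lL lG g pb pi 0 0 /\
     (forall m, 0 <= m <= pb -> mubar_is lL lG g pb pi m m -> m = 0)) /\
  (~ R0_le_1 lG pb pi h ->
     exists ms, 0 < ms <= pb /\ mubar_is lL lG g pb pi ms ms /\
       (forall m, 0 < m <= pb -> mubar_is lL lG g pb pi m m -> m = ms)).
Proof.
  assert (Hex : exists n, 0 < pi (S n)).
  { apply NNPP. intro Hn.
    assert (Hz : forall n, pi n = 0).
    { intro n. destruct n; auto. destruct (Rle_lt_dec (pi (S n)) 0) as [Hle|Hlt].
      pose proof (hpi_nn (S n)); lra. exfalso; apply Hn; eauto. }
    assert (infinite_sum pi 0) by (eapply inf_ext; [|exact inf_zero]; intros; rewrite Hz; reflexivity).
    pose proof (UL_sequence _ _ _ hpi_sum H). lra. }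
  destruct Hex as [n0 Hn0].
  assert (Hpb : 0 < pb).
  { apply (inf_pos _ _ (S n0) hpb).
    - intros; apply Rmult_le_pos; [apply pos_INR|auto].
    - apply Rmult_lt_0_compat; [apply lt_0_INR; lia| auto]. }
  set (tm := term lL lG g pb pi).
  set (q := qq lL lG g pb pi).
  assert (Hvex : forall m, 0 <= m -> exists v, infinite_sum (tm m) v).
  { intros m Hm. apply (inf_exists _ (fun n => INR n * pi n) pb); auto. intros; apply term_bounds; auto. }
  assert (Hvle : forall m v, 0 <= m -> infinite_sum (tm m) v -> v <= pb).
  { intros m v Hm Hv. apply (inf_le _ _ _ _ Hv hpb). intros; apply term_bounds; auto. }
  assert (Huniq : forall m m', 0 < m -> 0 < m' -> infinite_sum (tm m) m -> infinite_sum (tm m') m' -> m = m').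
  { intros m m' Hm Hm' H1 H2. destruct (Rtotal_order m m') as [Hlt|[Heq|Hgt]]; auto; exfalso.
    - apply (fix_lt lL lG g pb pi m m' n0); auto.
    - apply (fix_lt lL lG g pb pi m' m n0); auto. }
  assert (Hr : forall N, sum_f_R0 (q 0) N = lG / pb * sum_f_R0 (fun nu => pi nu * INR nu * h nu 1%nat) N).
  { intros N. rewrite scal_sum. apply sum_eq. intros nu _. unfold q. rewrite (qq0_R0 lL lG g pb pi h nu); auto. ring. }
  split.
  - intros HR. split.
    + apply mubar_iff; auto; try lra. eapply inf_ext; [|exact inf_zero]. intro nu. unfold term. ring.
    + intros m [Hm0 Hmpb] Hmu. apply mubar_iff in Hmu; auto. fold tm in Hmu.
      destruct (Rle_lt_or_eq_dec 0 m Hm0) as [Hpos|Heq]; [|auto]. exfalso.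
      set (d := fun nu => m * (q 0 nu - q m nu)).
      assert (Hd : forall nu, 0 <= d nu).
      { intros nu. unfold d. apply Rmult_le_pos; [lra|].
        pose proof (qq_anti lL lG g pb pi 0 m nu hlL hlG hg Hpb hpi0 hpi_nn ltac:(lra)). unfold q. lra. }
      assert (Hd0 : 0 < d (S n0)).
      { unfold d. apply Rmult_lt_0_compat; [lra|].
        pose proof (qq_strict lL lG g pb pi 0 m n0 hlL hlG hg Hpb Hn0 ltac:(lra)). unfold q. lra. }
      assert (m <= m - d (S n0)).
      { apply (inf_ub _ _ (S n0) _ Hmu). intros N HN.
        assert (E : sum_f_R0 (tm m) N = sum_f_R0 (q 0) N * m - sum_f_R0 d N * 1).
        { rewrite <- sum_lin. apply sum_eq. intros. unfold tm, term, d, q. ring. }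
        rewrite E. pose proof (sum_ge_term d N Hd (S n0) HN).
        pose proof (HR N). rewrite <- Hr in H0.
        assert (sum_f_R0 (q 0) N * m <= 1 * m) by (apply Rmult_le_compat_r; lra). lra. }
      lra.
  - intros HR.
    assert (HN : exists N, 1 < sum_f_R0 (q 0) N).
    { apply not_all_ex_not in HR. destruct HR as [N HN]. exists N. rewrite Hr. lra. }
    destruct HN as [N HN].
    destruct (qq_sum_lower lL lG g pb pi N hlL hlG hg Hpb hpi0 hpi_nn) as [C [HC HCb]].
    set (del := sum_f_R0 (q 0) N - 1).
    set (m0 := Rmin pb (del / (2 * (C + 1)))).
    assert (Hm0pos : 0 < m0).
    { unfold m0. apply Rmin_glb_lt; auto. apply Rdiv_lt_0_compat; unfold del; lra. }
    assert (Hm0pb : m0 <= pb) by apply Rmin_l.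
    assert (Hm0d : C * m0 < del).
    { assert (m0 <= del / (2 * (C + 1))) by apply Rmin_r.
      assert (C * m0 <= C * (del / (2 * (C + 1)))) by (apply Rmult_le_compat_l; lra).
      assert (C * (del / (2 * (C + 1))) < del).
      { replace (C * (del / (2 * (C + 1)))) with (del * (C / (2 * (C+1)))) by (field; lra).
        assert (C / (2 * (C+1)) < 1).
        { apply (Rmult_lt_reg_r (2 * (C+1))); [lra|]. unfold Rdiv. rewrite Rmult_assoc, Rinv_l by lra. lra. }
        unfold del in *. nra. }
      lra. }
    assert (Hq1 : 1 < sum_f_R0 (q m0) N).
    { specialize (HCb m0 ltac:(lra)). fold q in HCb.
      destruct (Rlt_le_dec 1 (sum_f_R0 (q m0) N)) as [|Hle]; auto. exfalso.
      assert (0 <= sum_f_R0 (q m0) N) by (apply sum_nonneg; intros; apply qq_nonneg; auto; lra).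
      assert (0 <= C * m0) by (apply Rmult_le_pos; lra).
      assert ((1 + C * m0) * sum_f_R0 (q m0) N <= (1 + C * m0) * 1) by (apply Rmult_le_compat_l; lra).
      unfold del in Hm0d. lra. }
    assert (Hpart : m0 < sum_f_R0 (tm m0) N).
    { assert (E : sum_f_R0 (tm m0) N = m0 * sum_f_R0 (q m0) N).
      { rewrite scal_sum. apply sum_eq. intros. unfold tm, term, q. ring. }
      rewrite E. nra. }
    set (Aset := fun m => m0 <= m <= pb /\ exists v, infinite_sum (tm m) v /\ m <= v).
    assert (HA0 : Aset m0).
    { split; [lra|]. destruct (Hvex m0 ltac:(lra)) as [v Hv]. exists v. split; auto.
      pose proof (inf_ge_partial _ _ Hv (fun n => proj1 (term_bounds lL lG g pb pi m0 n hlL hlG hg Hpb hpi0 hpi_nn ltac:(lra))) N).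
      lra. }
    destruct (completeness Aset ltac:(exists pb; intros x [Hx _]; lra) ltac:(exists m0; auto)) as [ms [Hub Hleast]].
    assert (Hms0 : m0 <= ms) by (apply Hub; auto).
    assert (Hmspb : ms <= pb) by (apply Hleast; intros x [Hx _]; lra).
    destruct (Hvex ms ltac:(lra)) as [vs Hvs].
    assert (Hmono : forall m m' v v', 0 <= m <= m' -> infinite_sum (tm m) v -> infinite_sum (tm m') v' -> v <= v').
    { intros m m' v v' Hmm Hv Hv'. apply (inf_le _ _ _ _ Hv Hv'). intros; apply term_mono; auto. }
    assert (Hge : ms <= vs).
    { apply Rnot_lt_le. intro Hlt.
      assert (Hnub : ~ is_upper_bound Aset vs).
      { intro Hb. specialize (Hleast vs Hb). lra. }
      apply Hnub. intros m [Hm [v [Hv Hmv]]].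
      assert (m <= ms) by (apply Hub; split; [auto| exists v; auto]).
      pose proof (Hmono m ms v vs ltac:(lra) Hv Hvs). lra. }
    assert (Hle : vs <= ms).
    { apply Rnot_lt_le. intro Hlt.
      pose proof (Hvle ms vs ltac:(lra) Hvs).
      set (m1 := (ms + vs) / 2).
      destruct (Hvex m1 ltac:(unfold m1; lra)) as [v1 Hv1].
      pose proof (Hmono ms m1 vs v1 ltac:(unfold m1; lra) Hvs Hv1).
      assert (Aset m1) by (split; [unfold m1; lra| exists v1; split; auto; unfold m1; lra]).
      pose proof (Hub m1 H1). unfold m1 in H2. lra. }
    assert (Hfix : infinite_sum (tm ms) ms) by (replace ms with vs at 2 by lra; auto).
    exists ms. split; [lra|]. split.
    + apply mubar_iff; auto; lra.
    + intros m [Hm Hmpb] Hmu. apply mubar_iff in Hmu; auto; [|lra].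
      apply Huniq; auto; lra.
Qed.
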